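(* Let $G$ be a group. Suppose $G$ has a $k$-paradoxical decomposition with translating sets $S_1,\ldots,S_k$ and an $l$-paradoxical decomposition with translating sets $T_1,\ldots,T_l$. Then $G$ has a $kl$-paradoxical decomposition with translating sets $\{S_iT_j: 1\le i\le k,\ 1\le j\le l\}$.
   Context: For $k\geq2$, $G$ admits a $k$-paradoxical decomposition with translating sets $S_1=\{g_{1,1},\ldots,g_{1,n_1}\},\ldots,S_k=\{g_{k,1},\ldots,g_{k,n_k}\}$ (finite subsets of $G$) if there are pairwise disjoint subsets $P_{i,j}$ ($1\le i\le k$, $1\le j\le n_i$) of $G$ such that $G=\bigcup_{j=1}^{n_i}P_{i,j}g_{i,j}$ for each $i$. $S_iT_j=\{st: s\in S_i, t\in T_j\}$. *)

(* Defs.v *)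
From HB Require Import structures.
From mathcomp Require Import all_boot.
From mathcomp Require Import boolp classical_sets cardinality.
Set Implicit Arguments. Unset Strict Implicit. Unset Printing Implicit Defensive.
Local Open Scope classical_set_scope.

Record group_axioms (G : Type) (mul : G -> G -> G) (one : G) (inv : G -> G)
  : Prop := GroupAxioms {
  mulA : forall x y z, mul x (mul y z) = mul (mul x y) z;
  mul1g : forall x, mul one x = x;
  mulg1 : forall x, mul x one = x;
  mulVg : forall x, mul (inv x) x = one;
  mulgV : forall x, mul x (inv x) = one }.

Definition rtrans (G : Type) (mul : G -> G -> G) (P : set G) (g : G) : set G :=
  [set mul p g | p in P].

Definition setmul (G : Type) (mul : G -> G -> G) (S T : set G) : set G :=
  [set mul s t | s in S & t in T].

Definition paradoxical_decomposition (G : Type) (mul : G -> G -> G)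
    (I : finType) (S : I -> set G) : Prop :=
  (forall i, finite_set (S i)) /\
  exists P : I -> G -> set G,
    (forall i g j h, S i g -> S j h -> (i, g) <> (j, h) ->
       P i g `&` P j h = set0) /\
    (forall i, \bigcup_(g in S i) rtrans mul (P i g) g = setT).

Definition k_paradoxical (G : Type) (mul : G -> G -> G) (k : nat)
    (S : 'I_k -> set G) : Prop :=
  paradoxical_decomposition mul S.

(* Main.v *)
Require Import Defs.
From mathcomp Require Import all_boot.
From mathcomp Require Import boolp classical_sets cardinality.
Local Open Scope classical_set_scope.

Theorem lemma3p3 (G : Type) (mul : G -> G -> G) (one : G) (inv : G -> G)
    (HG : group_axioms mul one inv)
    (k l : nat) (hk : (2 <= k)%N) (hl : (2 <= l)%N)
    (S : 'I_k -> set G) (T : 'I_l -> set G) :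
  k_paradoxical mul S -> k_paradoxical mul T ->
  paradoxical_decomposition mul
    (fun ij : 'I_k * 'I_l => setmul mul (S ij.1) (T ij.2)).
Proof.
move=> [fS [P [dP cP]]] [fT [Q [dQ cQ]]].
split.
  by move=> [i j]; exact: finite_image2.
exists (fun ij g => [set p | exists s t, [/\ S ij.1 s, T ij.2 t, mul s t = g,
                      P ij.1 s p & Q ij.2 t (mul p s)]]).
split.
  move=> [i j] g [i' j'] h _ _ neq /=.
  apply/seteqP; split => // x [[s [t [Ss Tt Eg Px Qx]]] [s' [t' [Ss' Tt' Eh Px' Qx']]]].
  have ess : (i, s) = (i', s').
    apply: contrapT => ne.
    have := dP i s i' s' Ss Ss' ne.
    by move/seteqP => [+ _] => /(_ x (conj Px Px')).
  case: ess => ei es; subst i' s'.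
  have ett : (j, t) = (j', t').
    apply: contrapT => ne.
    have := dQ j t j' t' Tt Tt' ne.
    by move/seteqP => [+ _] => /(_ _ (conj Qx Qx')).
  case: ett => ej et; subst j' t'.
  by apply: neq; rewrite -Eg -Eh.
move=> [i j] /=.
apply/seteqP; split => // x _.
have := cQ j; move/seteqP => [_ /(_ x I)] [t Tt [q Qq Eq]].
have := cP i; move/seteqP => [_ /(_ q I)] [s Ss [p Pp Ep]].
exists (mul s t); first by exists s => //; exists t.
exists p; last by rewrite -Eq -Ep (mulA HG).
exists s, t; split => //.
by rewrite Ep.
Qed.
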